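(* Let $\mathbf{t}:\mathcal{D}\to\mathcal{T}$ be a closed monoidal refinement system. Then, whenever the pullbacks and pushforwards involved exist, there are vertical isomorphisms: (a) for $c:A\to A'$, $d:B\to B'$, $P\sqsubset A$, $Q\sqsubset B$: $(c\otimes d)_!(P\otimes Q)\cong c_!P\otimes d_!Q$; (b) for $c:A\to A'$, $d:C'\to C$, $P\sqsubset A$, $R\sqsubset C$: $(c_!P)\backslash(d^*R)\cong (c\backslash d)^*(P\backslash R)$, where $c\backslash d:A'\backslash C'\to A\backslash C$ is the action of the left residual functor $\backslash:\mathcal T^{op}\times\mathcal T\to\mathcal T$; (c) for $c:B\to B'$, $d:C'\to C$, $Q\sqsubset B$, $R\sqsubset C$: $(d^*R)/(c_!Q)\cong (d/c)^*(R/Q)$, where $d/c:C'/B'\to C/B$ is the action of the right residual functor $/:\mathcal T\times\mathcal T^{op}\to\mathcal T$.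
   Context: A refinement system is a functor $\mathbf{t}:\mathcal{D}\to\mathcal{T}$; composition is written diagrammatically ($c;d$ = first $c$ then $d$). Write $P\sqsubset A$ if $\mathbf t(P)=A$; a derivation of $P\Rightarrow_c Q$ ($c:A\to B$, $P\sqsubset A$, $Q\sqsubset B$) is a morphism $\alpha:P\to Q$ with $\mathbf t(\alpha)=c$. Refinements $P,Q\sqsubset A$ are vertically isomorphic ($P\cong Q$) if there is an isomorphism $P\to Q$ mapped to $\mathrm{id}_A$. A pullback of $Q\sqsubset B$ along $c:A\to B$ is $c^*Q\sqsubset A$ with a derivation $\lambda$ of $c^*Q\Rightarrow_cQ$ such that for all $P\sqsubset X$, $d:X\to A$, post-composition with $\lambda$ is a bijection from derivations of $P\Rightarrow_d c^*Q$ to derivations of $P\Rightarrow_{d;c}Q$. A pushforward of $P\sqsubset A$ along $c:A\to B$ is $c_!P\sqsubset B$ with a derivation $\kappa$ of $P\Rightarrow_c c_!P$ such that for all $Q\sqsubset Y$, $d:B\to Y$, pre-composition with $\kappa$ is a bijection from derivations of $c_!P\Rightarrow_dQ$ to derivations of $P\Rightarrow_{c;d}Q$. A monoidal category is closed if it has a left residual $X\backslash Z$ and right residual $Z/Y$ with natural bijections $\mathcal C(Y,X\backslash Z)\cong\mathcal C(X\otimes Y,Z)\cong\mathcal C(X,Z/Y)$. A closed monoidal refinement system is a functor $\mathbf t:\mathcal D\to\mathcal T$ between closed monoidal categories which strictly preserves tensor products, unit, and both residuals (together with their structure maps), so that $P\otimes Q\sqsubset A\otimes B$, $P\backslash R\sqsubset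 A\backslash C$, $R/Q\sqsubset C/B$ whenever $P\sqsubset A$, $Q\sqsubset B$, $R\sqsubset C$. *)

(* Defs.v *)
(* a small self-contained development of categories,
   closed monoidal categories and closed monoidal refinement systems.
   Composition is diagrammatic: [comp f g] = "first f then g" = f;g. *)
Set Implicit Arguments.
Unset Strict Implicit.

Record Cat := {
  ob :> Type;
  hom : ob -> ob -> Type;
  idc : forall A, hom A A;
  comp : forall A B C, hom A B -> hom B C -> hom A C;
  comp_id_l : forall A B (f : hom A B), comp (idc A) f = f;
  comp_id_r : forall A B (f : hom A B), comp f (idc B) = f;
  comp_assoc : forall A B C D (f : hom A B) (g : hom B C) (h : hom C D),
      comp (comp f g) h = comp f (comp g h)
}.
Arguments hom {c} _ _.
Arguments idc {c} _.
Arguments comp {c A B C} _ _.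

Record Functor (C D : Cat) := {
  fobj :> C -> D;
  fmap : forall A B, @hom C A B -> @hom D (fobj A) (fobj B);
  fmap_id : forall A, fmap (idc A) = idc (fobj A);
  fmap_comp : forall A B E (f : @hom C A B) (g : @hom C B E),
      fmap (comp f g) = comp (fmap f) (fmap g)
}.
Arguments fobj {C D} _ _.
Arguments fmap {C D} _ {A B} _.

Definition HomEq {C : Cat} {A B A' B' : C} (f : hom A B) (g : hom A' B') : Prop :=
  existT (fun p : C * C => hom (fst p) (snd p)) (A, B) f
  = existT (fun p : C * C => hom (fst p) (snd p)) (A', B') g.

Record Monoidal (C : Cat) := {
  tens : C -> C -> C;
  tensm : forall A A' B B', hom A A' -> hom B B' -> hom (tens A B) (tens A' B');
  tensm_id : forall A B, tensm (idc A) (idc B) = idc (tens A B);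
  tensm_comp : forall A A' A'' B B' B'' (f : hom A A') (f' : hom A' A'')
      (g : hom B B') (g' : hom B' B''),
      tensm (comp f f') (comp g g') = comp (tensm f g) (tensm f' g');
  munit : C;
  assoc : forall A B E, hom (tens (tens A B) E) (tens A (tens B E));
  assoc_inv : forall A B E, hom (tens A (tens B E)) (tens (tens A B) E);
  assoc_iso1 : forall A B E, comp (assoc A B E) (assoc_inv A B E) = idc _;
  assoc_iso2 : forall A B E, comp (assoc_inv A B E) (assoc A B E) = idc _;
  assoc_nat : forall A A' B B' E E' (f : hom A A') (g : hom B B') (h : hom E E'),
      comp (tensm (tensm f g) h) (assoc A' B' E')
      = comp (assoc A B E) (tensm f (tensm g h));
  lunit : forall A, hom (tens munit A) A;
  lunit_inv : forall A, hom A (tens munit A);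
  lunit_iso1 : forall A, comp (lunit A) (lunit_inv A) = idc _;
  lunit_iso2 : forall A, comp (lunit_inv A) (lunit A) = idc _;
  lunit_nat : forall A A' (f : hom A A'),
      comp (tensm (idc munit) f) (lunit A') = comp (lunit A) f;
  runit : forall A, hom (tens A munit) A;
  runit_inv : forall A, hom A (tens A munit);
  runit_iso1 : forall A, comp (runit A) (runit_inv A) = idc _;
  runit_iso2 : forall A, comp (runit_inv A) (runit A) = idc _;
  runit_nat : forall A A' (f : hom A A'),
      comp (tensm f (idc munit)) (runit A') = comp (runit A) f;
  pentagon : forall A B E F,
      comp (assoc (tens A B) E F) (assoc A B (tens E F))
      = comp (tensm (assoc A B E) (idc F))
             (comp (assoc A (tens B E) F) (tensm (idc A) (assoc B E F)));
  triangle : forall A B,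
      comp (assoc A munit B) (tensm (idc A) (lunit B))
      = tensm (runit A) (idc B)
}.
Arguments tens {C} _ _ _.
Arguments tensm {C} _ {A A' B B'} _ _.
Arguments munit {C} _.
Arguments assoc {C} _ _ _ _.
Arguments assoc_inv {C} _ _ _ _.
Arguments lunit {C} _ _.
Arguments lunit_inv {C} _ _.
Arguments runit {C} _ _.
Arguments runit_inv {C} _ _.

(* ---------- Closed structure ----------
   lres X Z  = X \ Z   (left residual),  hom Y (X\Z) ~ hom (X (x) Y) Z
   rres Z Y  = Z / Y   (right residual), hom X (Z/Y) ~ hom (X (x) Y) Z
   lresm f k : X\Z -> X'\Z'  for f : X' -> X, k : Z -> Z'  (functor T^op x T -> T)
   rresm k g : Z/Y -> Z'/Y'  for k : Z -> Z', g : Y' -> Y  (functor T x T^op -> T) *)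
Record Closed (C : Cat) (M : Monoidal C) := {
  lres : C -> C -> C;
  lresm : forall X X' Z Z', hom X' X -> hom Z Z' -> hom (lres X Z) (lres X' Z');
  lresm_id : forall X Z, lresm (idc X) (idc Z) = idc (lres X Z);
  lresm_comp : forall X X' X'' Z Z' Z'' (f : hom X' X) (f' : hom X'' X')
      (k : hom Z Z') (k' : hom Z' Z''),
      lresm (comp f' f) (comp k k') = comp (lresm f k) (lresm f' k');
  lcurry : forall X Y Z, hom (tens M X Y) Z -> hom Y (lres X Z);
  luncurry : forall X Y Z, hom Y (lres X Z) -> hom (tens M X Y) Z;
  luncurry_lcurry : forall X Y Z (h : hom (tens M X Y) Z), luncurry (lcurry h) = h;
  lcurry_luncurry : forall X Y Z (g : hom Y (lres X Z)), lcurry (luncurry g) = g;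
  lcurry_nat : forall X X' Y Y' Z Z' (f : hom X' X) (g : hom Y' Y)
      (h : hom (tens M X Y) Z) (k : hom Z Z'),
      lcurry (comp (tensm M f g) (comp h k)) = comp g (comp (lcurry h) (lresm f k));
  rres : C -> C -> C;
  rresm : forall Z Z' Y Y', hom Z Z' -> hom Y' Y -> hom (rres Z Y) (rres Z' Y');
  rresm_id : forall Z Y, rresm (idc Z) (idc Y) = idc (rres Z Y);
  rresm_comp : forall Z Z' Z'' Y Y' Y'' (k : hom Z Z') (k' : hom Z' Z'')
      (g : hom Y' Y) (g' : hom Y'' Y'),
      rresm (comp k k') (comp g' g) = comp (rresm k g) (rresm k' g');
  rcurry : forall X Y Z, hom (tens M X Y) Z -> hom X (rres Z Y);
  runcurry : forall X Y Z, hom X (rres Z Y) -> hom (tens M X Y) Z;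
  runcurry_rcurry : forall X Y Z (h : hom (tens M X Y) Z), runcurry (rcurry h) = h;
  rcurry_runcurry : forall X Y Z (g : hom X (rres Z Y)), rcurry (runcurry g) = g;
  rcurry_nat : forall X X' Y Y' Z Z' (f : hom X' X) (g : hom Y' Y)
      (h : hom (tens M X Y) Z) (k : hom Z Z'),
      rcurry (comp (tensm M f g) (comp h k)) = comp f (comp (rcurry h) (rresm k g))
}.
Arguments lres {C M} _ _ _.
Arguments lresm {C M} _ {X X' Z Z'} _ _.
Arguments lcurry {C M} _ {X Y Z} _.
Arguments luncurry {C M} _ {X Y Z} _.
Arguments rres {C M} _ _ _.
Arguments rresm {C M} _ {Z Z' Y Y'} _ _.
Arguments rcurry {C M} _ {X Y Z} _.
Arguments runcurry {C M} _ {X Y Z} _.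

Definition lev {C : Cat} {M : Monoidal C} (K : Closed M) (X Z : C)
  : hom (tens M X (lres K X Z)) Z := luncurry K (idc (lres K X Z)).
Definition lcoev {C : Cat} {M : Monoidal C} (K : Closed M) (X Y : C)
  : hom Y (lres K X (tens M X Y)) := lcurry K (idc (tens M X Y)).
Definition rev {C : Cat} {M : Monoidal C} (K : Closed M) (Z Y : C)
  : hom (tens M (rres K Z Y) Y) Z := runcurry K (idc (rres K Z Y)).
Definition rcoev {C : Cat} {M : Monoidal C} (K : Closed M) (X Y : C)
  : hom X (rres K (tens M X Y) Y) := rcurry K (idc (tens M X Y)).

Record CMRS := {
  cD : Cat;
  cT : Cat;
  mD : Monoidal cD;
  mT : Monoidal cT;
  kD : Closed mD;
  kT : Closed mT;
  rt : Functor cD cT;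
  t_tens : forall P Q, rt (tens mD P Q) = tens mT (rt P) (rt Q);
  t_tensm : forall P P' Q Q' (a : hom P P') (b : hom Q Q'),
      HomEq (fmap rt (tensm mD a b)) (tensm mT (fmap rt a) (fmap rt b));
  t_unit : rt (munit mD) = munit mT;
  t_assoc : forall P Q R,
      HomEq (fmap rt (assoc mD P Q R)) (assoc mT (rt P) (rt Q) (rt R));
  t_assoc_inv : forall P Q R,
      HomEq (fmap rt (assoc_inv mD P Q R)) (assoc_inv mT (rt P) (rt Q) (rt R));
  t_lunit : forall P, HomEq (fmap rt (lunit mD P)) (lunit mT (rt P));
  t_lunit_inv : forall P, HomEq (fmap rt (lunit_inv mD P)) (lunit_inv mT (rt P));
  t_runit : forall P, HomEq (fmap rt (runit mD P)) (runit mT (rt P));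
  t_runit_inv : forall P, HomEq (fmap rt (runit_inv mD P)) (runit_inv mT (rt P));
  t_lres : forall P R, rt (lres kD P R) = lres kT (rt P) (rt R);
  t_lresm : forall P P' R R' (a : hom P' P) (b : hom R R'),
      HomEq (fmap rt (lresm kD a b)) (lresm kT (fmap rt a) (fmap rt b));
  t_lev : forall P R, HomEq (fmap rt (lev kD P R)) (lev kT (rt P) (rt R));
  t_lcoev : forall P Q, HomEq (fmap rt (lcoev kD P Q)) (lcoev kT (rt P) (rt Q));
  t_rres : forall R Q, rt (rres kD R Q) = rres kT (rt R) (rt Q);
  t_rresm : forall R R' Q Q' (a : hom R R') (b : hom Q' Q),
      HomEq (fmap rt (rresm kD a b)) (rresm kT (fmap rt a) (fmap rt b));
  t_rev : forall R Q, HomEq (fmap rt (rev kD R Q)) (rev kT (rt R) (rt Q));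
  t_rcoev : forall P Q, HomEq (fmap rt (rcoev kD P Q)) (rcoev kT (rt P) (rt Q))
}.

Section Refinement.
Variable S : CMRS.

Definition refines (P : cD S) (A : cT S) : Prop := rt S P = A.

Definition Over {P Q : cD S} (alpha : hom P Q) {A B : cT S} (c : hom A B) : Prop :=
  HomEq (fmap (rt S) alpha) c.

Definition VIso (P Q : cD S) : Prop :=
  exists (f : hom P Q) (g : hom Q P),
    comp f g = idc P /\ comp g f = idc Q /\ Over f (idc (rt S P)).

Definition IsPullback {A B : cT S} (c : hom A B) (Q R : cD S) (lam : hom R Q) : Prop :=
  refines Q B /\ refines R A /\ Over lam c /\
  forall (X : cT S) (P : cD S) (d : hom X A), refines P X ->
    forall beta : hom P Q, Over beta (comp d c) ->
      exists! alpha : hom P R, Over alpha d /\ comp alpha lam = beta.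

Definition IsPushforward {A B : cT S} (c : hom A B) (P R : cD S) (kap : hom P R) : Prop :=
  refines P A /\ refines R B /\ Over kap c /\
  forall (Y : cT S) (Q : cD S) (d : hom B Y), refines Q Y ->
    forall beta : hom P Q, Over beta (comp c d) ->
      exists! alpha : hom R Q, Over alpha d /\ comp kap alpha = beta.

End Refinement.

Arguments refines {S} P A.
Arguments Over {S P Q} alpha {A B} c.
Arguments VIso {S} P Q.
Arguments IsPullback {S A B} c Q R lam.
Arguments IsPushforward {S A B} c P R kap.

(* Main.v *)
Require Import Defs.
From Stdlib Require Import Eqdep.

Lemma HomEq_inv {C : Cat} {A B A' B' : C} (f : hom A B) (f' : hom A' B') :
  HomEq f f' -> A = A' /\ B = B'.
Proof.
  intro H. apply (f_equal (@projT1 _ _)) in H. simpl in H.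
  split; [apply (f_equal fst) in H | apply (f_equal snd) in H]; exact H.
Qed.

Lemma HomEq_eq {C : Cat} {A B : C} (f g : hom A B) : HomEq f g -> f = g.
Proof. intro H. unfold HomEq in H.
  exact (inj_pair2 _ (fun p : C * C => hom (fst p) (snd p)) (A, B) f g H). Qed.

Lemma eq_HomEq {C : Cat} {A B : C} (f g : hom A B) : f = g -> HomEq f g.
Proof. intros ->. reflexivity. Qed.

Lemma HomEq_refl {C : Cat} {A B : C} (f : hom A B) : HomEq f f.
Proof. reflexivity. Qed.

Lemma HomEq_sym {C : Cat} {A B A' B' : C} (f : hom A B) (f' : hom A' B') :
  HomEq f f' -> HomEq f' f.
Proof. unfold HomEq. intros; symmetry; assumption. Qed.

Lemma HomEq_trans {C : Cat} {A B A' B' A'' B'' : C} (f : hom A B) (f' : hom A' B')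
  (f'' : hom A'' B'') : HomEq f f' -> HomEq f' f'' -> HomEq f f''.
Proof. unfold HomEq. intros H1 H2; rewrite H1; exact H2. Qed.

Ltac homeq_destr H :=
  let e1 := fresh in let e2 := fresh in
  destruct (HomEq_inv _ _ H) as [e1 e2]; subst; apply HomEq_eq in H; subst.

Lemma HomEq_comp {C : Cat} {A B E A' B' E' : C} (f : hom A B) (g : hom B E)
  (f' : hom A' B') (g' : hom B' E') :
  HomEq f f' -> HomEq g g' -> HomEq (comp f g) (comp f' g').
Proof. intros H1 H2. homeq_destr H1. homeq_destr H2. reflexivity. Qed.

Lemma HomEq_tensm {C : Cat} (M : Monoidal C) {A A' B B' X X' Y Y' : C}
  (f : hom A A') (g : hom B B') (f' : hom X X') (g' : hom Y Y') :
  HomEq f f' -> HomEq g g' -> HomEq (tensm M f g) (tensm M f' g').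
Proof. intros H1 H2. homeq_destr H1. homeq_destr H2. reflexivity. Qed.

Lemma HomEq_lresm {C : Cat} {M : Monoidal C} (K : Closed M) {A A' B B' X X' Y Y' : C}
  (f : hom A' A) (g : hom B B') (f' : hom X' X) (g' : hom Y Y') :
  HomEq f f' -> HomEq g g' -> HomEq (lresm K f g) (lresm K f' g').
Proof. intros H1 H2. homeq_destr H1. homeq_destr H2. reflexivity. Qed.

Lemma HomEq_rresm {C : Cat} {M : Monoidal C} (K : Closed M) {A A' B B' X X' Y Y' : C}
  (f : hom A A') (g : hom B' B) (f' : hom X X') (g' : hom Y' Y) :
  HomEq f f' -> HomEq g g' -> HomEq (rresm K f g) (rresm K f' g').
Proof. intros H1 H2. homeq_destr H1. homeq_destr H2. reflexivity. Qed.

Lemma lcurry_inj {C : Cat} {M : Monoidal C} (K : Closed M) {X Y Z : C}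
  (a b : hom (tens M X Y) Z) : lcurry K a = lcurry K b -> a = b.
Proof. intro H. rewrite <- (luncurry_lcurry K a), <- (luncurry_lcurry K b), H. reflexivity. Qed.
Lemma rcurry_inj {C : Cat} {M : Monoidal C} (K : Closed M) {X Y Z : C}
  (a b : hom (tens M X Y) Z) : rcurry K a = rcurry K b -> a = b.
Proof. intro H. rewrite <- (runcurry_rcurry K a), <- (runcurry_rcurry K b), H. reflexivity. Qed.

Lemma lcurry_pre {C : Cat} {M : Monoidal C} (K : Closed M) {X Y Y' Z : C}
  (g : hom Y' Y) (h : hom (tens M X Y) Z) :
  lcurry K (comp (tensm M (idc X) g) h) = comp g (lcurry K h).
Proof. pose proof (lcurry_nat K (idc X) g h (idc Z)) as H.
  rewrite comp_id_r, lresm_id, comp_id_r in H. exact H. Qed.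

Lemma lcurry_post {C : Cat} {M : Monoidal C} (K : Closed M) {X X' Y Z Z' : C}
  (f : hom X' X) (h : hom (tens M X Y) Z) (k : hom Z Z') :
  comp (lcurry K h) (lresm K f k) = lcurry K (comp (tensm M f (idc Y)) (comp h k)).
Proof. rewrite (lcurry_nat K f (idc Y) h k), comp_id_l. reflexivity. Qed.

Lemma lcurry_lev {C : Cat} {M : Monoidal C} (K : Closed M) (X Z : C) :
  lcurry K (lev K X Z) = idc _.
Proof. unfold lev. apply lcurry_luncurry. Qed.

Lemma luncurry_def {C : Cat} {M : Monoidal C} (K : Closed M) {X Y Z : C}
  (g : hom Y (lres K X Z)) : luncurry K g = comp (tensm M (idc X) g) (lev K X Z).
Proof. apply (lcurry_inj K). rewrite lcurry_luncurry, lcurry_pre, lcurry_lev, comp_id_r.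
  reflexivity. Qed.

Lemma lcurry_def {C : Cat} {M : Monoidal C} (K : Closed M) {X Y Z : C}
  (h : hom (tens M X Y) Z) : lcurry K h = comp (lcoev K X Y) (lresm K (idc X) h).
Proof. unfold lcoev. rewrite lcurry_post, tensm_id, !comp_id_l. reflexivity. Qed.

Lemma tensm_split1 {C : Cat} (M : Monoidal C) {A A' B B' : C} (f : hom A A') (g : hom B B') :
  tensm M f g = comp (tensm M f (idc B)) (tensm M (idc A') g).
Proof. rewrite <- tensm_comp, comp_id_l, comp_id_r. reflexivity. Qed.
Lemma tensm_split2 {C : Cat} (M : Monoidal C) {A A' B B' : C} (f : hom A A') (g : hom B B') :
  tensm M f g = comp (tensm M (idc A) g) (tensm M f (idc B')).
Proof. rewrite <- tensm_comp, comp_id_l, comp_id_r. reflexivity. Qed.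

Lemma luncurry_pre {C : Cat} {M : Monoidal C} (K : Closed M) {X Y Y' Z : C}
  (g : hom Y' Y) (u : hom Y (lres K X Z)) :
  luncurry K (comp g u) = comp (tensm M (idc X) g) (luncurry K u).
Proof. rewrite !luncurry_def, <- comp_assoc, <- tensm_comp, comp_id_l. reflexivity. Qed.

Lemma luncurry_post {C : Cat} {M : Monoidal C} (K : Closed M) {X X' Y Z Z' : C}
  (g : hom Y (lres K X Z)) (f : hom X' X) (k : hom Z Z') :
  luncurry K (comp g (lresm K f k)) = comp (tensm M f g) (comp (lev K X Z) k).
Proof. apply (lcurry_inj K). rewrite lcurry_luncurry, lcurry_nat, lcurry_lev, comp_id_l.
  reflexivity. Qed.

Lemma rcurry_pre {C : Cat} {M : Monoidal C} (K : Closed M) {X X' Y Z : C}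
  (f : hom X' X) (h : hom (tens M X Y) Z) :
  rcurry K (comp (tensm M f (idc Y)) h) = comp f (rcurry K h).
Proof. pose proof (rcurry_nat K f (idc Y) h (idc Z)) as H.
  rewrite comp_id_r, rresm_id, comp_id_r in H. exact H. Qed.

Lemma rcurry_post {C : Cat} {M : Monoidal C} (K : Closed M) {X Y Y' Z Z' : C}
  (g : hom Y' Y) (h : hom (tens M X Y) Z) (k : hom Z Z') :
  comp (rcurry K h) (rresm K k g) = rcurry K (comp (tensm M (idc X) g) (comp h k)).
Proof. rewrite (rcurry_nat K (idc X) g h k), comp_id_l. reflexivity. Qed.

Lemma rcurry_rev {C : Cat} {M : Monoidal C} (K : Closed M) (Z Y : C) :
  rcurry K (rev K Z Y) = idc _.
Proof. unfold rev. apply rcurry_runcurry. Qed.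

Lemma runcurry_def {C : Cat} {M : Monoidal C} (K : Closed M) {X Y Z : C}
  (g : hom X (rres K Z Y)) : runcurry K g = comp (tensm M g (idc Y)) (rev K Z Y).
Proof. apply (rcurry_inj K). rewrite rcurry_runcurry, rcurry_pre, rcurry_rev, comp_id_r.
  reflexivity. Qed.

Lemma rcurry_def {C : Cat} {M : Monoidal C} (K : Closed M) {X Y Z : C}
  (h : hom (tens M X Y) Z) : rcurry K h = comp (rcoev K X Y) (rresm K h (idc Y)).
Proof. unfold rcoev. rewrite rcurry_post, tensm_id, !comp_id_l. reflexivity. Qed.

Lemma runcurry_pre {C : Cat} {M : Monoidal C} (K : Closed M) {X X' Y Z : C}
  (f : hom X' X) (u : hom X (rres K Z Y)) :
  runcurry K (comp f u) = comp (tensm M f (idc Y)) (runcurry K u).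
Proof. rewrite !runcurry_def, <- comp_assoc, <- tensm_comp, comp_id_l. reflexivity. Qed.

Lemma runcurry_post {C : Cat} {M : Monoidal C} (K : Closed M) {X Y Y' Z Z' : C}
  (g : hom X (rres K Z Y)) (f : hom Y' Y) (k : hom Z Z') :
  runcurry K (comp g (rresm K k f)) = comp (tensm M g f) (comp (rev K Z Y) k).
Proof. apply (rcurry_inj K). rewrite rcurry_runcurry, rcurry_nat, rcurry_rev, comp_id_l.
  reflexivity. Qed.

Lemma fmap_idH (S : CMRS) (X : cD S) : HomEq (fmap (rt S) (idc X)) (idc (rt S X)).
Proof. apply eq_HomEq, fmap_id. Qed.

Lemma fmap_compH (S : CMRS) {X Y Z : cD S} (f : hom X Y) (g : hom Y Z) {A B E : cT S}
  (f' : hom A B) (g' : hom B E) :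
  HomEq (fmap (rt S) f) f' -> HomEq (fmap (rt S) g) g' ->
  HomEq (fmap (rt S) (comp f g)) (comp f' g').
Proof. intros. rewrite fmap_comp. apply HomEq_comp; assumption. Qed.

Lemma t_tensmH (S : CMRS) {P P' Q Q' : cD S} (a : hom P P') (b : hom Q Q')
  {A A' B B' : cT S} (a' : hom A A') (b' : hom B B') :
  HomEq (fmap (rt S) a) a' -> HomEq (fmap (rt S) b) b' ->
  HomEq (fmap (rt S) (tensm (mD S) a b)) (tensm (mT S) a' b').
Proof. intros. eapply HomEq_trans. apply t_tensm. apply HomEq_tensm; assumption. Qed.

Lemma t_lresmH (S : CMRS) {P P' Q Q' : cD S} (a : hom P' P) (b : hom Q Q')
  {A A' B B' : cT S} (a' : hom A' A) (b' : hom B B') :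
  HomEq (fmap (rt S) a) a' -> HomEq (fmap (rt S) b) b' ->
  HomEq (fmap (rt S) (lresm (kD S) a b)) (lresm (kT S) a' b').
Proof. intros. eapply HomEq_trans. apply t_lresm. apply HomEq_lresm; assumption. Qed.

Lemma t_rresmH (S : CMRS) {P P' Q Q' : cD S} (a : hom P P') (b : hom Q' Q)
  {A A' B B' : cT S} (a' : hom A A') (b' : hom B' B) :
  HomEq (fmap (rt S) a) a' -> HomEq (fmap (rt S) b) b' ->
  HomEq (fmap (rt S) (rresm (kD S) a b)) (rresm (kT S) a' b').
Proof. intros. eapply HomEq_trans. apply t_rresm. apply HomEq_rresm; assumption. Qed.

Lemma t_lcurry (S : CMRS) {X Y Z : cD S} (h : hom (tens (mD S) X Y) Z) {Z' : cT S}
  (h' : hom (tens (mT S) (rt S X) (rt S Y)) Z') :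
  HomEq (fmap (rt S) h) h' -> HomEq (fmap (rt S) (lcurry (kD S) h)) (lcurry (kT S) h').
Proof. intro H. rewrite lcurry_def, (lcurry_def (kT S)).
  apply fmap_compH. exact (@t_lcoev S X Y). apply t_lresmH. apply fmap_idH. exact H. Qed.

Lemma t_luncurry (S : CMRS) {X Y Z : cD S} (g : hom Y (lres (kD S) X Z)) {Y' : cT S}
  (g' : hom Y' (lres (kT S) (rt S X) (rt S Z))) :
  HomEq (fmap (rt S) g) g' -> HomEq (fmap (rt S) (luncurry (kD S) g)) (luncurry (kT S) g').
Proof. intro H. rewrite luncurry_def, (luncurry_def (kT S)).
  apply fmap_compH. apply t_tensmH. apply fmap_idH. exact H. exact (@t_lev S X Z). Qed.

Lemma t_rcurry (S : CMRS) {X Y Z : cD S} (h : hom (tens (mD S) X Y) Z) {Z' : cT S}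
  (h' : hom (tens (mT S) (rt S X) (rt S Y)) Z') :
  HomEq (fmap (rt S) h) h' -> HomEq (fmap (rt S) (rcurry (kD S) h)) (rcurry (kT S) h').
Proof. intro H. rewrite rcurry_def, (rcurry_def (kT S)).
  apply fmap_compH. exact (@t_rcoev S X Y). apply t_rresmH. exact H. apply fmap_idH. Qed.

Lemma t_runcurry (S : CMRS) {X Y Z : cD S} (g : hom X (rres (kD S) Z Y)) {X' : cT S}
  (g' : hom X' (rres (kT S) (rt S Z) (rt S Y))) :
  HomEq (fmap (rt S) g) g' -> HomEq (fmap (rt S) (runcurry (kD S) g)) (runcurry (kT S) g').
Proof. intro H. rewrite runcurry_def, (runcurry_def (kT S)).
  apply fmap_compH. apply t_tensmH. exact H. apply fmap_idH. exact (@t_rev S Z Y). Qed.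

Lemma push_unique (S : CMRS) {A B : cT S} (c : hom A B) (P R R' : cD S)
  (kap : hom P R) (kap' : hom P R') :
  IsPushforward c P R kap -> IsPushforward c P R' kap' -> VIso R R'.
Proof.
  intros [rP [rR [oK U]]] [_ [rR' [oK' U']]]. unfold refines in *. subst A B.
  assert (oc : Over kap' (comp c (idc (rt S R)))) by (rewrite comp_id_r; exact oK').
  assert (oc' : Over kap (comp c (idc (rt S R)))) by (rewrite comp_id_r; exact oK).
  destruct (U _ _ (idc (rt S R)) rR' kap' oc) as [f [[fo fe] _]].
  destruct (U' _ _ (idc (rt S R)) eq_refl kap oc') as [g [[go ge] _]].
  exists f, g. split; [|split].
  - destruct (U _ _ (idc (rt S R)) eq_refl kap oc') as [x [_ xu]].
    transitivity x; [symmetry|]; apply xu; split.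
    + unfold Over. rewrite <- (comp_id_l (idc (rt S R))).
      apply fmap_compH; [exact fo|]. exact go.
    + rewrite <- comp_assoc, fe, ge. reflexivity.
    + apply fmap_idH.
    + apply comp_id_r.
  - destruct (U' _ _ (idc (rt S R)) rR' kap' oc) as [x [_ xu]].
    transitivity x; [symmetry|]; apply xu; split.
    + unfold Over. rewrite <- (comp_id_l (idc (rt S R))).
      apply fmap_compH; [exact go|]. exact fo.
    + rewrite <- comp_assoc, ge, fe. reflexivity.
    + unfold Over. rewrite <- rR'. apply fmap_idH.
    + apply comp_id_r.
  - exact fo.
Qed.

Lemma pull_unique (S : CMRS) {A B : cT S} (c : hom A B) (Q R R' : cD S)
  (lam : hom R Q) (lam' : hom R' Q) :
  IsPullback c Q R lam -> IsPullback c Q R' lam' -> VIso R R'.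
Proof.
  intros [rQ [rR [oL U]]] [_ [rR' [oL' U']]]. unfold refines in *. subst A B.
  assert (oc : Over lam' (comp (idc (rt S R)) c)) by (rewrite comp_id_l; exact oL').
  assert (oc' : Over lam (comp (idc (rt S R)) c)) by (rewrite comp_id_l; exact oL).
  destruct (U _ _ (idc (rt S R)) rR' lam' oc) as [g [[go ge] _]].
  destruct (U' _ _ (idc (rt S R)) eq_refl lam oc') as [f [[fo fe] _]].
  exists f, g. split; [|split].
  - destruct (U _ _ (idc (rt S R)) eq_refl lam oc') as [x [_ xu]].
    transitivity x; [symmetry|]; apply xu; split.
    + unfold Over. rewrite <- (comp_id_l (idc (rt S R))).
      apply fmap_compH; [exact fo|]. exact go.
    + rewrite comp_assoc, ge, fe. reflexivity.
    + apply fmap_idH.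
    + apply comp_id_l.
  - destruct (U' _ _ (idc (rt S R)) rR' lam' oc) as [x [_ xu]].
    transitivity x; [symmetry|]; apply xu; split.
    + unfold Over. rewrite <- (comp_id_l (idc (rt S R))).
      apply fmap_compH; [exact go|]. exact fo.
    + rewrite comp_assoc, fe, ge. reflexivity.
    + unfold Over. rewrite <- rR'. apply fmap_idH.
    + apply comp_id_l.
  - exact fo.
Qed.

Lemma tens_push (S : CMRS) {A A' B B' : cT S} (c : hom A A') (d : hom B B')
  (P Q cP dQ : cD S) (k1 : hom P cP) (k2 : hom Q dQ) :
  IsPushforward c P cP k1 -> IsPushforward d Q dQ k2 ->
  IsPushforward (tensm (mT S) c d) (tens (mD S) P Q) (tens (mD S) cP dQ)
    (tensm (mD S) k1 k2).
Proof.
  intros [rP [rcP [o1 U1]]] [rQ [rdQ [o2 U2]]]. unfold refines in *. subst A A' B B'.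
  split; [|split; [|split]].
  - apply t_tens.
  - apply t_tens.
  - unfold Over. apply t_tensmH; assumption.
  - intros Y Z e rZ beta ob. unfold refines in rZ. subst Y.
    pose (h1 := comp (tensm (mT S) c (idc (rt S dQ))) e).
    assert (ob1 : Over (lcurry (kD S) beta) (comp d (lcurry (kT S) h1))).
    { unfold Over. rewrite <- lcurry_pre. unfold h1.
      rewrite <- comp_assoc, <- tensm_comp, comp_id_l, comp_id_r. apply t_lcurry. exact ob. }
    destruct (U2 _ (lres (kD S) P Z) (lcurry (kT S) h1) (t_lres _ _) _ ob1)
      as [a1 [[oa1 ea1] ua1]].
    pose (g := luncurry (kD S) a1).
    assert (og : Over g h1).
    { unfold Over, g. rewrite <- (luncurry_lcurry (kT S) h1). apply t_luncurry. exact oa1. }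
    assert (eg : comp (tensm (mD S) (idc P) k2) g = beta).
    { unfold g. rewrite <- luncurry_pre, ea1. apply luncurry_lcurry. }
    assert (ob2 : Over (rcurry (kD S) g) (comp c (rcurry (kT S) e))).
    { unfold Over. rewrite <- rcurry_pre. apply t_rcurry. exact og. }
    destruct (U1 _ (rres (kD S) Z dQ) (rcurry (kT S) e) (t_rres _ _) _ ob2)
      as [a2 [[oa2 ea2] ua2]].
    exists (runcurry (kD S) a2). split; [split|].
    + unfold Over. rewrite <- (runcurry_rcurry (kT S) e). apply t_runcurry. exact oa2.
    + rewrite tensm_split2, comp_assoc, <- runcurry_pre, ea2, runcurry_rcurry. exact eg.
    + intros phi [ophi ephi].
      assert (Hg : comp (tensm (mD S) k1 (idc dQ)) phi = g).
      { apply (lcurry_inj (kD S)). unfold g. rewrite lcurry_luncurry.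
        symmetry. apply ua1. split.
        - unfold Over. apply t_lcurry. unfold h1. apply fmap_compH; [|exact ophi].
          apply t_tensmH; [exact o1| apply fmap_idH].
        - rewrite <- lcurry_pre, <- comp_assoc, <- tensm_comp, comp_id_l, comp_id_r, ephi.
          reflexivity. }
      assert (Hr : rcurry (kD S) phi = a2).
      { symmetry. apply ua2. split.
        - unfold Over. apply t_rcurry. exact ophi.
        - rewrite <- rcurry_pre, Hg. reflexivity. }
      rewrite <- Hr, runcurry_rcurry. reflexivity.
Qed.

Lemma lres_pull (S : CMRS) {A A' C C' : cT S} (c : hom A A') (d : hom C' C)
  (P R cP dR : cD S) (k : hom P cP) (l : hom dR R) :
  IsPushforward c P cP k -> IsPullback d R dR l ->
  IsPullback (lresm (kT S) c d) (lres (kD S) P R) (lres (kD S) cP dR) (lresm (kD S) k l).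
Proof.
  intros [rP [rcP [ok Uk]]] [rR [rdR [ol Ul]]]. unfold refines in *. subst A A' C C'.
  split; [|split; [|split]].
  - apply t_lres.
  - apply t_lres.
  - unfold Over. apply t_lresmH; assumption.
  - intros X W e rW beta ob. unfold refines in rW. subst X.
    pose (h0 := comp (tensm (mT S) (idc (rt S cP)) e) (comp (lev (kT S) (rt S cP) (rt S dR)) d)).
    pose (v := rcurry (kT S) h0).
    assert (ob1 : Over (rcurry (kD S) (luncurry (kD S) beta)) (comp c v)).
    { unfold Over, v. rewrite <- rcurry_pre. unfold h0.
      rewrite <- comp_assoc, <- tensm_comp, comp_id_l, comp_id_r, <- luncurry_post.
      apply t_rcurry. apply t_luncurry. exact ob. }
    destruct (Uk _ (rres (kD S) R W) v (t_rres _ _) _ ob1) as [a1 [[oa1 ea1] ua1]].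
    pose (dl := runcurry (kD S) a1).
    pose (u := comp (tensm (mT S) (idc (rt S cP)) e) (lev (kT S) (rt S cP) (rt S dR))).
    assert (od0 : Over dl h0).
    { unfold Over, dl. rewrite <- (runcurry_rcurry (kT S) h0). apply t_runcurry. exact oa1. }
    assert (od : Over dl (comp u d)) by (unfold u; rewrite comp_assoc; exact od0).
    destruct (Ul _ (tens (mD S) cP W) u (t_tens _ _) dl od) as [a2 [[oa2 ea2] ua2]].
    assert (Eu : lcurry (kT S) u = e).
    { unfold u. rewrite lcurry_pre, lcurry_lev, comp_id_r. reflexivity. }
    exists (lcurry (kD S) a2). split; [split|].
    + unfold Over. rewrite <- Eu. apply t_lcurry. exact oa2.
    + rewrite lcurry_post, ea2. unfold dl.
      rewrite <- runcurry_pre, ea1, runcurry_rcurry, lcurry_luncurry. reflexivity.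
    + intros phi [ophi ephi].
      assert (Hd : comp (luncurry (kD S) phi) l = dl).
      { apply (rcurry_inj (kD S)). unfold dl. rewrite rcurry_runcurry. symmetry. apply ua1.
        split.
        - unfold Over, v. apply t_rcurry. unfold h0. rewrite <- comp_assoc, <- luncurry_def.
          apply fmap_compH; [apply t_luncurry; exact ophi | exact ol].
        - rewrite <- rcurry_pre. rewrite <- ephi, luncurry_post.
          rewrite luncurry_def, comp_assoc, <- (comp_assoc (tensm (mD S) k (idc W))),
            <- tensm_comp, comp_id_l, comp_id_r. reflexivity. }
      assert (H2 : luncurry (kD S) phi = a2).
      { symmetry. apply ua2. split.
        - unfold Over, u. rewrite <- luncurry_def. apply t_luncurry. exact ophi.
        - exact Hd. }
      rewrite <- H2, lcurry_luncurry. reflexivity.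
Qed.

Lemma rres_pull (S : CMRS) {B B' C C' : cT S} (c : hom B B') (d : hom C' C)
  (Q R cQ dR : cD S) (k : hom Q cQ) (l : hom dR R) :
  IsPullback d R dR l -> IsPushforward c Q cQ k ->
  IsPullback (rresm (kT S) d c) (rres (kD S) R Q) (rres (kD S) dR cQ) (rresm (kD S) l k).
Proof.
  intros [rR [rdR [ol Ul]]] [rQ [rcQ [ok Uk]]]. unfold refines in *. subst B B' C C'.
  split; [|split; [|split]].
  - apply t_rres.
  - apply t_rres.
  - unfold Over. apply t_rresmH; assumption.
  - intros X W e rW beta ob. unfold refines in rW. subst X.
    pose (h0 := comp (tensm (mT S) e (idc (rt S cQ))) (comp (rev (kT S) (rt S dR) (rt S cQ)) d)).
    pose (v := lcurry (kT S) h0).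
    assert (ob1 : Over (lcurry (kD S) (runcurry (kD S) beta)) (comp c v)).
    { unfold Over, v. rewrite <- lcurry_pre. unfold h0.
      rewrite <- comp_assoc, <- tensm_comp, comp_id_l, comp_id_r, <- runcurry_post.
      apply t_lcurry. apply t_runcurry. exact ob. }
    destruct (Uk _ (lres (kD S) W R) v (t_lres _ _) _ ob1) as [a1 [[oa1 ea1] ua1]].
    pose (dl := luncurry (kD S) a1).
    pose (u := comp (tensm (mT S) e (idc (rt S cQ))) (rev (kT S) (rt S dR) (rt S cQ))).
    assert (od0 : Over dl h0).
    { unfold Over, dl. rewrite <- (luncurry_lcurry (kT S) h0). apply t_luncurry. exact oa1. }
    assert (od : Over dl (comp u d)) by (unfold u; rewrite comp_assoc; exact od0).
    destruct (Ul _ (tens (mD S) W cQ) u (t_tens _ _) dl od) as [a2 [[oa2 ea2] ua2]].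
    assert (Eu : rcurry (kT S) u = e).
    { unfold u. rewrite rcurry_pre, rcurry_rev, comp_id_r. reflexivity. }
    exists (rcurry (kD S) a2). split; [split|].
    + unfold Over. rewrite <- Eu. apply t_rcurry. exact oa2.
    + rewrite rcurry_post, ea2. unfold dl.
      rewrite <- luncurry_pre, ea1, luncurry_lcurry, rcurry_runcurry. reflexivity.
    + intros phi [ophi ephi].
      assert (Hd : comp (runcurry (kD S) phi) l = dl).
      { apply (lcurry_inj (kD S)). unfold dl. rewrite lcurry_luncurry. symmetry. apply ua1.
        split.
        - unfold Over, v. apply t_lcurry. unfold h0. rewrite <- comp_assoc, <- runcurry_def.
          apply fmap_compH; [apply t_runcurry; exact ophi | exact ol].
        - rewrite <- lcurry_pre. rewrite <- ephi, runcurry_post.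
          rewrite runcurry_def, comp_assoc, <- (comp_assoc (tensm (mD S) (idc W) k)),
            <- tensm_comp, comp_id_l, comp_id_r. reflexivity. }
      assert (H2 : runcurry (kD S) phi = a2).
      { symmetry. apply ua2. split.
        - unfold Over, u. rewrite <- runcurry_def. apply t_runcurry. exact ophi.
        - exact Hd. }
      rewrite <- H2, rcurry_runcurry. reflexivity.
Qed.
Theorem proposition2p4 (S : CMRS) :
  (* (a)  (c (x) d)_!(P (x) Q) ≅ c_!P (x) d_!Q *)
  (forall (A A' B B' : cT S) (c : hom A A') (d : hom B B') (P Q : cD S),
     refines P A -> refines Q B ->
     forall (cP : cD S) (k1 : hom P cP), IsPushforward c P cP k1 ->
     forall (dQ : cD S) (k2 : hom Q dQ), IsPushforward d Q dQ k2 ->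
     forall (E : cD S) (k3 : hom (tens (mD S) P Q) E),
       IsPushforward (tensm (mT S) c d) (tens (mD S) P Q) E k3 ->
     VIso E (tens (mD S) cP dQ))
  /\
  (* (b)  (c_!P) \ (d^*R) ≅ (c\d)^*(P\R) *)
  (forall (A A' C C' : cT S) (c : hom A A') (d : hom C' C) (P R : cD S),
     refines P A -> refines R C ->
     forall (cP : cD S) (k : hom P cP), IsPushforward c P cP k ->
     forall (dR : cD S) (l : hom dR R), IsPullback d R dR l ->
     forall (E : cD S) (l2 : hom E (lres (kD S) P R)),
       IsPullback (lresm (kT S) c d) (lres (kD S) P R) E l2 ->
     VIso (lres (kD S) cP dR) E)
  /\
  (* (c)  (d^*R) / (c_!Q) ≅ (d/c)^*(R/Q) *)
  (forall (B B' C C' : cT S) (c : hom B B') (d : hom C' C) (Q R : cD S),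
     refines Q B -> refines R C ->
     forall (dR : cD S) (l : hom dR R), IsPullback d R dR l ->
     forall (cQ : cD S) (k : hom Q cQ), IsPushforward c Q cQ k ->
     forall (E : cD S) (l2 : hom E (rres (kD S) R Q)),
       IsPullback (rresm (kT S) d c) (rres (kD S) R Q) E l2 ->
     VIso (rres (kD S) dR cQ) E).
Proof.
  split; [|split].
  - intros A A' B B' c d P Q _ _ cP k1 H1 dQ k2 H2 E k3 H3.
    eapply push_unique; [exact H3 | apply tens_push; eassumption].
  - intros A A' C C' c d P R _ _ cP k Hk dR l Hl E l2 H.
    eapply pull_unique; [apply lres_pull; eassumption | exact H].
  - intros B B' C C' c d Q R _ _ dR l Hl cQ k Hk E l2 H.
    eapply pull_unique; [apply rres_pull; eassumption | exact H].
Qed.
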